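(* Let $\lambda\in\mathbf{C}$ with $\lambda\neq1$ and let $r\in\mathbf{Z}_{+}$. For every $n\in\mathbf{Z}_{+}$ (nonnegative integers), \[ H_{n}(x\vert\lambda)=\frac{1}{(1-\lambda)^{r}}\sum_{k=0}^{n}\binom{n}{k}\Bigl(\sum_{j=0}^{r}\binom{r}{j}(-\lambda)^{r-j}H_{n-k}(j\vert\lambda)\Bigr)H_{k}^{(r)}(x\vert\lambda). \]
   Context: For $\lambda\in\mathbf{C}$, $\lambda\neq1$, the Frobenius–Euler polynomials are defined by $\frac{1-\lambda}{e^{t}-\lambda}e^{xt}=\sum_{n=0}^{\infty}H_{n}(x\vert\lambda)\frac{t^{n}}{n!}$, and for $r\in\mathbf{Z}_{+}$ the Frobenius–Euler polynomials of order $r$ are defined by $\left(\frac{1-\lambda}{e^{t}-\lambda}\right)^{r}e^{xt}=\sum_{n=0}^{\infty}H_{n}^{(r)}(x\vert\lambda)\frac{t^{n}}{n!}$. $H_{n-k}(j\vert\lambda)$ is $H_{n-k}(x\vert\lambda)$ evaluated at $x=j$. *)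

(* Defs.v *)
From HB Require Import structures.
From mathcomp Require Import all_boot all_order all_algebra.
From mathcomp Require Export complex.
From mathcomp Require Export reals.
Set Implicit Arguments. Unset Strict Implicit. Unset Printing Implicit Defensive.
Import Order.TTheory GRing.Theory Num.Theory.
Local Open Scope ring_scope.

(* Formal power series in t over a field F, given by their coefficient
   sequences (coefficient of t^n). *)
Section FPS.
Variable F : fieldType.
Definition fps := nat -> F.

Definition fps_one : fps := fun n => if n == 0%N then 1 else 0.

Definition fps_mul (a b : fps) : fps :=
  fun n => \sum_(i < n.+1) a i * b (n - i)%N.

Definition fps_pow (a : fps) (r : nat) : fps := iter r (fps_mul a) fps_one.

(* multiplicative inverse (meaningful when a 0 != 0):
   b 0 = a0^-1,  b (n+1) = - a0^-1 * sum_{i=0}^{n} a (i+1) * b (n-i) *)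
Fixpoint fps_inv_list (a : fps) (n : nat) : seq F :=
  match n with
  | 0%N => [:: (a 0%N)^-1]
  | m.+1 => let s := fps_inv_list a m in
            rcons s (- (a 0%N)^-1 *
                     \sum_(i < m.+1) a i.+1 * nth 0 s (m - i)%N)
  end.
Definition fps_inv (a : fps) : fps := fun n => nth 0 (fps_inv_list a n) n.

Definition fps_exp (c : F) : fps := fun n => c ^+ n / (n`!)%:R.

(* (1 - lam) / (e^t - lam) *)
Definition FE_base (lam : F) : fps :=
  fun n => (1 - lam) *
    fps_inv (fun m => (m`!)%:R^-1 - (if m == 0%N then lam else 0)) n.

(* Frobenius-Euler polynomials H_n(x|lam):
   (1-lam)/(e^t-lam) e^{xt} = sum_n H_n(x|lam) t^n/n! *)
Definition FrobEuler (lam x : F) (n : nat) : F :=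
  (n`!)%:R * fps_mul (FE_base lam) (fps_exp x) n.

(* Frobenius-Euler polynomials of order r, H_n^{(r)}(x|lam):
   ((1-lam)/(e^t-lam))^r e^{xt} = sum_n H_n^{(r)}(x|lam) t^n/n! *)
Definition FrobEulerOrd (lam : F) (r : nat) (x : F) (n : nat) : F :=
  (n`!)%:R * fps_mul (fps_pow (FE_base lam) r) (fps_exp x) n.
End FPS.

(* Main.v *)
Require Import Defs.
From HB Require Import structures.
From mathcomp Require Import all_boot all_order all_algebra.
From mathcomp Require Import complex reals ring.
Import Order.TTheory GRing.Theory Num.Theory.
Local Open Scope ring_scope.
Set Implicit Arguments. Unset Strict Implicit.

Section Aux.
Variable F : numFieldType.

Definition eqt (N : nat) (p q : {poly F}) := forall m, (m <= N)%N -> p`_m = q`_m.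
Definition agree (N : nat) (f : fps F) (p : {poly F}) :=
  forall m, (m <= N)%N -> f m = p`_m.

Lemma eqt_refl N p : eqt N p p. Proof. by []. Qed.
Lemma eqt_sym N p q : eqt N p q -> eqt N q p.
Proof. by move=> h m hm; rewrite h. Qed.
Lemma eqt_trans N p q s : eqt N p q -> eqt N q s -> eqt N p s.
Proof. by move=> h1 h2 m hm; rewrite h1 ?h2. Qed.
Lemma eqt_eq N p q : p = q -> eqt N p q. Proof. by move=> ->. Qed.

Lemma eqt_mul N p p' q q' : eqt N p p' -> eqt N q q' -> eqt N (p * q) (p' * q').
Proof.
move=> hp hq m hm; rewrite !coefM; apply: eq_bigr => [[i hi]] _ /=.
rewrite hp ?hq //; last by apply: leq_trans hm; rewrite ltnS in hi.
by apply: leq_trans (leq_subr i m) hm.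
Qed.

Lemma eqt_add N p p' q q' : eqt N p p' -> eqt N q q' -> eqt N (p + q) (p' + q').
Proof. by move=> hp hq m hm; rewrite !coefD hp ?hq. Qed.

Lemma eqt_scale N c p q : eqt N p q -> eqt N (c *: p) (c *: q).
Proof. by move=> h m hm; rewrite !coefZ h. Qed.

Lemma eqt_exp N p q k : eqt N p q -> eqt N (p ^+ k) (q ^+ k).
Proof. by move=> h; elim: k => [|k IH]; rewrite ?expr0 // !exprS; apply: eqt_mul. Qed.

Lemma eqt_sum N k (P Q : 'I_k -> {poly F}) :
  (forall i, eqt N (P i) (Q i)) ->
  eqt N (\sum_(i < k) P i) (\sum_(i < k) Q i).
Proof.
move=> h m hm; rewrite !coef_sum; apply: eq_bigr => i _; exact: h.
Qed.

Lemma agree_poly N f : agree N f (\poly_(i < N.+1) f i).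
Proof. by move=> m hm; rewrite coef_poly ltnS hm. Qed.

Lemma agree_mul N f g p q : agree N f p -> agree N g q ->
  agree N (fps_mul f g) (p * q).
Proof.
move=> hp hq m hm; rewrite coefM /fps_mul; apply: eq_bigr => [[i hi]] _ /=.
rewrite hp ?hq //; last by apply: leq_trans hm; rewrite ltnS in hi.
by apply: leq_trans (leq_subr i m) hm.
Qed.

Lemma agree_eqt N f p q : agree N f p -> agree N f q -> eqt N p q.
Proof. by move=> h1 h2 m hm; rewrite -h1 ?h2. Qed.

Lemma agree_one N : agree N (fps_one F) 1.
Proof. by move=> [|m] _; rewrite coef1. Qed.

Lemma agree_pow N f p r : agree N f p -> agree N (fps_pow f r) (p ^+ r).
Proof.
move=> h; elim: r => [|r IH]; first exact: agree_one.
by rewrite exprS /fps_pow iterS; apply: agree_mul.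
Qed.

Variable a : fps F.
Hypothesis a0 : a 0%N != 0.

Lemma size_inv_list m : size (fps_inv_list a m) = m.+1.
Proof. by elim: m => [|m IH] //=; rewrite size_rcons IH. Qed.

Lemma inv_list_prefix m k : (k <= m)%N -> nth 0 (fps_inv_list a m) k = fps_inv a k.
Proof.
elim: m => [|m IH] hk.
  by move: hk; rewrite leqn0 => /eqP ->.
case: (ltnP k m.+1) => hk'.
  by rewrite /= nth_rcons size_inv_list hk' IH.
have -> : k = m.+1 by apply/eqP; rewrite eqn_leq hk hk'.
by [].
Qed.

Lemma fps_inv_S m : fps_inv a m.+1 =
  - (a 0%N)^-1 * \sum_(i < m.+1) a i.+1 * fps_inv a (m - i)%N.
Proof.
rewrite {1}/fps_inv /= nth_rcons size_inv_list ltnn eqxx.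
congr (_ * _); apply: eq_bigr => [[i hi]] _ /=.
by rewrite inv_list_prefix ?leq_subr.
Qed.

Lemma fps_mul_inv m : fps_mul a (fps_inv a) m = fps_one F m.
Proof.
rewrite /fps_mul /fps_one; case: m => [|m].
  by rewrite big_ord1 /fps_inv /= mulfV.
rewrite big_ord_recl /= subn0 fps_inv_S.
under eq_bigr => i _ do rewrite /bump /= add1n subSS.
by rewrite mulrA mulrN mulfV // mulN1r addNr.
Qed.

End Aux.

Section Main.
Variable F : numFieldType.

Lemma natf_fact_neq0 m : (m`!)%:R != 0 :> F.
Proof. by rewrite pnatr_eq0 -lt0n fact_gt0. Qed.

Definition Xp (N : nat) (c : F) : {poly F} := \poly_(i < N.+1) fps_exp c i.

Lemma Xp_mul (N : nat) (b c : F) : eqt N (Xp N b * Xp N c) (Xp N (b + c)).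
Proof.
move=> m hm; rewrite coefM coef_poly ltnS hm /fps_exp addrC exprDn mulr_suml.
apply: eq_bigr => [[i hi]] _ /=.
have hi' : (i <= m)%N by rewrite ltnS in hi.
rewrite !coef_poly ltnS (leq_trans hi' hm) ltnS (leq_trans (leq_subr i m) hm).
rewrite /fps_exp -mulr_natr -(bin_fact hi') !natrM.
have h1 := natf_fact_neq0 i; have h2 := natf_fact_neq0 (m - i).
have h3 : ('C(m, i))%:R != 0 :> F by rewrite pnatr_eq0 -lt0n bin_gt0.
field; rewrite h1 h2 h3 //.
Qed.

Lemma Xp_exp (N j : nat) : eqt N (Xp N 1 ^+ j) (Xp N j%:R).
Proof.
elim: j => [|j IH].
  move=> m hm; rewrite expr0 coef1 coef_poly ltnS hm /fps_exp.
  by case: m {hm} => [|m]; rewrite ?expr0 ?divr1 // expr0n mul0r.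
rewrite exprSr; apply: eqt_trans (eqt_mul IH (@eqt_refl _ _ _)) _.
by rewrite -addn1 natrD; apply: Xp_mul.
Qed.

End Main.

Section Thm.
Variable F : numFieldType.

Lemma main (lam : F) (hlam : lam != 1) (r n : nat) (x : F) :
  FrobEuler lam x n =
  ((1 - lam) ^+ r)^-1 *
    \sum_(k < n.+1) ('C(n, k))%:R *
      (\sum_(j < r.+1) ('C(r, j))%:R * (- lam) ^+ (r - j) *
          FrobEuler lam (j%:R) (n - k)) *
      FrobEulerOrd lam r x k.
Proof.
pose B := \poly_(i < n.+1) FE_base lam i.
have hB : agree n (FE_base lam) B := @agree_poly F n _.
have hX c : agree n (fps_exp c) (Xp n c) := @agree_poly F n _.
have hFE m c : (m <= n)%N -> FrobEuler lam c m = (m`!)%:R * (B * Xp n c)`_m.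
  by move=> hm; rewrite /FrobEuler (agree_mul hB (hX c)).
have hFEO m : (m <= n)%N -> FrobEulerOrd lam r x m = (m`!)%:R * (B ^+ r * Xp n x)`_m.
  by move=> hm; rewrite /FrobEulerOrd (agree_mul (agree_pow r hB) (hX x)).
pose Q := \sum_(j < r.+1) (('C(r,j))%:R * (-lam)^+(r-j)) *: Xp n j%:R.
have hS m : (m <= n)%N -> \sum_(j < r.+1) ('C(r, j))%:R * (- lam) ^+ (r - j) *
          FrobEuler lam (j%:R) m = (m`!)%:R * (B * Q)`_m.
  move=> hm; rewrite /Q mulr_sumr coef_sum mulr_sumr; apply: eq_bigr => j _.
  by rewrite hFE // -scalerAr coefZ mulrCA.
have -> : \sum_(k < n.+1) ('C(n, k))%:R *
      (\sum_(j < r.+1) ('C(r, j))%:R * (- lam) ^+ (r - j) *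
          FrobEuler lam (j%:R) (n - k)) *
      FrobEulerOrd lam r x k = (n`!)%:R * (B ^+ r * Xp n x * (B * Q))`_n.
  rewrite coefM mulr_sumr; apply: eq_bigr => [[k hk]] _ /=.
  have hk' : (k <= n)%N by rewrite ltnS in hk.
  rewrite hS ?leq_subr // hFEO // -(bin_fact hk') !natrM; ring.
have hD : eqt n (B * (Xp n 1 - lam%:P)) ((1 - lam)%:P).
  pose a : fps F := fun m => (m`!)%:R^-1 - (if m == 0%N then lam else 0).
  have a0 : a 0%N != 0 by rewrite /a /= invr1 subr_eq0 eq_sym.
  have ha : agree n a (Xp n 1 - lam%:P).
    move=> m hm; rewrite coefB coefC coef_poly ltnS hm /fps_exp expr1n mul1r /a.
    by case: (m == 0%N).
  rewrite mulrC; apply: agree_eqt (agree_mul ha hB) _ => m hm.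
  rewrite coefC /fps_mul.
  have -> : \sum_(i < m.+1) a i * FE_base lam (m - i)%N =
     (1 - lam) * fps_mul a (fps_inv a) m.
    rewrite /fps_mul mulr_sumr; apply: eq_bigr => i _.
    by rewrite /FE_base mulrCA.
  by rewrite fps_mul_inv // /fps_one; case: (m == 0%N); rewrite ?mulr1 ?mulr0.
have hQ : eqt n Q ((Xp n 1 - lam%:P) ^+ r).
  rewrite addrC exprDn /Q; apply: eqt_sum => j.
  rewrite -polyCN -rmorphXn mul_polyC -scaler_nat scalerA mulrC.
  by apply: eqt_scale; apply: eqt_sym; apply: Xp_exp.
have hK : eqt n (B ^+ r * Xp n x * (B * Q)) ((1 - lam) ^+ r *: (B * Xp n x)).
  apply: eqt_trans (eqt_mul (@eqt_refl _ _ _) (eqt_mul (@eqt_refl _ _ _) hQ)) _.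
  have -> : B ^+ r * Xp n x * (B * (Xp n 1 - lam%:P) ^+ r) =
     (B * Xp n x) * (B * (Xp n 1 - lam%:P)) ^+ r by rewrite exprMn; ring.
  apply: eqt_trans (eqt_mul (@eqt_refl _ _ _) (eqt_exp r hD)) _.
  by apply: eqt_eq; rewrite -rmorphXn mulrC mul_polyC.
rewrite (hK n (leqnn n)) coefZ hFE //.
have hl : (1 - lam) ^+ r != 0 by rewrite expf_neq0 // subr_eq0 eq_sym.
by rewrite mulrCA mulKf.
Qed.
End Thm.

Theorem theorem6 (R : realType) (lam : R[i]) (hlam : lam != 1) (r n : nat)
    (x : R[i]) :
  FrobEuler lam x n =
  ((1 - lam) ^+ r)^-1 *
    \sum_(k < n.+1) ('C(n, k))%:R *
      (\sum_(j < r.+1) ('C(r, j))%:R * (- lam) ^+ (r - j) *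
          FrobEuler lam (j%:R) (n - k)) *
      FrobEulerOrd lam r x k.
Proof. exact: main. Qed.
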